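(* For every integer $g\ge 0$, let $n'_g$ denote the number of gapsets of genus $g$ and depth at most $3$. Let $(\mathrm{F}_n)_{n\ge0}$ be the Fibonacci numbers ($\mathrm{F}_0=0$, $\mathrm{F}_1=1$, $\mathrm{F}_n=\mathrm{F}_{n-1}+\mathrm{F}_{n-2}$) and $(\mathrm{T}_n)_{n\ge 0}$ the tribonacci numbers ($\mathrm{T}_0=0$, $\mathrm{T}_1=\mathrm{T}_2=1$, $\mathrm{T}_n=\mathrm{T}_{n-1}+\mathrm{T}_{n-2}+\mathrm{T}_{n-3}$ for $n\ge3$). Then for all $g\ge 3$, $$2\mathrm{F}_g \,\le\, n'_g \,\le\, \mathrm{T}_{g+1}.$$
   Context: A gapset is a finite set $G \subset \mathbb{N}_+=\{1,2,3,\dots\}$ such that for all $z \in G$, whenever $z=x+y$ with $x,y\in\mathbb{N}_+$, we have $x\in G$ or $y\in G$. The multiplicity of $G$ is the least $m\ge 1$ with $m\notin G$; its conductor is $c=\max G+1$ (with $c=0$ if $G=\emptyset$); its genus is $|G|$; its depth is $\lceil c/m\rceil$. *)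

(* Defs.v *)
From mathcomp Require Import all_boot all_order.
From mathcomp Require Import finmap.
Set Implicit Arguments. Unset Strict Implicit. Unset Printing Implicit Defensive.


Definition is_gapset (G : {fset nat}) : Prop :=
  (forall z, z \in G -> 0 < z) /\
  (forall x y, 0 < x -> 0 < y -> x + y \in G -> (x \in G) \/ (y \in G)).

(* max G (0 for the empty set; G contains only positive integers). *)
Definition fmax (G : {fset nat}) : nat := \max_(x <- G) x.

Lemma fmax_notin (G : {fset nat}) : exists m, (0 < m) && (m \notin G).
Proof.
exists (fmax G).+1; apply/andP; split => //; apply/negP => H.
have : (fmax G).+1 <= fmax G.
  by rewrite /fmax; apply: (@leq_bigmax_seq _ _ _ (fun x => x)).
by rewrite ltnn.
Qed.

Definition multiplicity (G : {fset nat}) : nat := ex_minn (fmax_notin G).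

Definition conductor (G : {fset nat}) : nat :=
  if G == fset0%fset then 0 else (fmax G).+1.

Definition genus (G : {fset nat}) : nat := #|` G|%fset.

(* depth = ceil(c / m)  (m >= 1 always) *)
Definition depth (G : {fset nat}) : nat :=
  let m := multiplicity G in (conductor G + m - 1) %/ m.

Fixpoint fib (n : nat) : nat :=
  match n with
  | 0 => 0
  | 1 => 1
  | (m.+1 as k).+1 => fib k + fib m
  end.

Fixpoint trib (n : nat) : nat :=
  match n with
  | 0 => 0
  | 1 => 1
  | 2 => 1
  | ((m.+1 as k).+1 as j).+1 => trib j + trib k + trib m
  end.

(* Main.v *)
Require Import Defs.
From mathcomp Require Import all_boot all_order.
From mathcomp Require Import finmap zify.
Set Implicit Arguments. Unset Strict Implicit. Unset Printing Implicit Defensive.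

Fixpoint weight (w : seq nat) : nat := if w is x :: w' then x.+1 + weight w' else 0.

Fixpoint words (g : nat) : seq (seq nat) :=
  match g with
  | 0 => [:: [::]]
  | g1.+1 => map (cons 0) (words g1) ++
      match g1 with
      | 0 => [::]
      | g2.+1 => map (cons 1) (words g2) ++
          match g2 with
          | 0 => [::]
          | g3.+1 => map (cons 2) (words g3)
          end
      end
  end.

Lemma mem_cons_map (c x : nat) (a : seq (seq nat)) w :
  (x :: w \in map (cons c) a) = (x == c) && (w \in a).
Proof.
have inj : injective (cons c) by move=> u v [].
case: eqP => [->|ne]; first by rewrite (mem_map inj).
by apply/mapP => -[u _ [E _]]; apply: ne.
Qed.

Lemma nil_notin_map (c : nat) (a : seq (seq nat)) : ([::] \in map (cons c) a) = false.
Proof. by apply/mapP => -[]. Qed.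

Lemma words3 g : words g.+3 =
  map (cons 0) (words g.+2) ++ map (cons 1) (words g.+1) ++ map (cons 2) (words g).
Proof. by []. Qed.

Lemma trib3 g : trib g.+3 = trib g.+2 + trib g.+1 + trib g.
Proof. by []. Qed.

Lemma size_words g : size (words g) = trib g.+1.
Proof.
elim/ltn_ind: g => -[|[|[|g]]] IH //.
rewrite words3 !size_cat !size_map !IH; [by rewrite addnA| lia ..].
Qed.

Lemma words1 : words 1 = map (cons 0) (words 0). Proof. by []. Qed.
Lemma words2 : words 2 = map (cons 0) (words 1) ++ map (cons 1) (words 0). Proof. by []. Qed.

Lemma mem_words g w : (w \in words g) = all (fun x => x <= 2) w && (weight w == g).
Proof.
elim/ltn_ind: g w => g IH [|x w] /=.
- by case: g IH => [|[|[|g]]] //= _; rewrite ?words3 !mem_cat ?nil_notin_map.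
- case: g IH => [|[|[|g]]] IH; rewrite ?words1 ?words2 ?words3 ?mem_cat ?mem_cons_map ?in_nil ?orbF.
  + by rewrite inE addSn andbF.
  + case: x => [|x] ; rewrite ?IH //=; lia.
  + case: x => [|[|x]] ; rewrite ?IH //=; lia.
  + case: x => [|[|[|x]]] ; rewrite ?IH //=; lia.
Qed.

Lemma fmax_ge (G : {fset nat}) x : x \in G -> x <= fmax G.
Proof. by move=> xG; rewrite /fmax; apply: (@leq_bigmax_seq _ _ _ (fun x => x)). Qed.

Lemma fmax_le (G : {fset nat}) k : (forall x, x \in G -> x <= k) -> fmax G <= k.
Proof. by move=> H; apply/bigmax_leqP_seq => i iG _; apply: H. Qed.

Lemma mult_spec G : [/\ 0 < multiplicity G, multiplicity G \notin G &
   forall k, 0 < k < multiplicity G -> k \in G].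
Proof.
rewrite /multiplicity; case: ex_minnP => m /andP[m0 mG] mmin; split => // k /andP[k0 km].
apply/negPn/negP => kG.
have := mmin k; rewrite k0 kG => /(_ isT); lia.
Qed.

Lemma multP G m : 0 < m -> m \notin G -> (forall k, 0 < k < m -> k \in G) ->
  multiplicity G = m.
Proof.
move=> m0 mG H; have [a b c] := mult_spec G.
case: (ltngtP m (multiplicity G)) => // lt.
- by move: (c m); rewrite m0 lt (negbTE mG) => /(_ isT).
- by move: (H (multiplicity G)); rewrite a lt (negbTE b) => /(_ isT).
Qed.

Lemma depth_le3 G : (depth G <= 3) = (conductor G <= 3 * multiplicity G).
Proof.
have [m0 _ _] := mult_spec G.
rewrite /depth -ltnS ltn_divLR //; lia.
Qed.

Lemma cond_le G k : conductor G <= k.+1 <-> forall x, x \in G -> x <= k.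
Proof.
rewrite /conductor; case: eqP => [->|ne].
  by split => // _ x; rewrite inE.
split => [H x xG|H].
  by rewrite -ltnS; apply: leq_trans H; rewrite ltnS fmax_ge.
by rewrite ltnS; apply: fmax_le.
Qed.
Definition memw (w : seq nat) (x : nat) : bool :=
 let m := (size w).+1 in
 [|| (0 < x < m), (m < x < 2*m) && (0 < nth 0 w (x - m).-1) | (2*m < x < 3*m) && (nth 0 w (x - 2*m).-1 == 2)].
Definition Gset (w : seq nat) : {fset nat} := [fset x in filter (memw w) (iota 0 (3 * (size w).+1))]%fset.
Lemma GsetE w x : (x \in Gset w) = memw w x.
Proof.
rewrite /Gset inE /= mem_filter mem_iota /=.
case M: (memw w x) => //=. move: M; rewrite /memw. move=> /or3P[/andP[]|/andP[]/andP[]|/andP[]/andP[]]; lia.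
Qed.
Lemma card_Gset w : #|` Gset w|%fset = count (memw w) (iota 0 (3 * (size w).+1)).
Proof. by rewrite card_fseq undup_id ?size_filter // filter_uniq // iota_uniq. Qed.

Section M.
Variable w : seq nat.
Local Notation m := (size w).+1.

Lemma memw_lo x : 0 < x < m -> memw w x.
Proof. by rewrite /memw => ->. Qed.

Lemma memw_mid x : m < x < 2 * m -> memw w x = (0 < nth 0 w (x - m).-1).
Proof.
case/andP=> h1 h2; rewrite /memw h1 h2 /=.
have -> : (x < m) = false by apply/negbTE; rewrite -leqNgt ltnW.
have -> : (2 * m < x) = false by apply/negbTE; rewrite -leqNgt ltnW.
by rewrite andbF /= orbF.
Qed.

Lemma memw_hi x : 2 * m < x < 3 * m -> memw w x = (nth 0 w (x - 2 * m).-1 == 2).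
Proof.
case/andP=> h1 h2; rewrite /memw h1 h2 /=.
have h3 : m < x by apply: leq_ltn_trans h1; rewrite leq_pmull.
have -> : (x < m) = false by apply/negbTE; rewrite -leqNgt ltnW.
have -> : (x < 2 * m) = false by apply/negbTE; rewrite -leqNgt ltnW.
by rewrite andbF /= h3.
Qed.

Lemma memw_out x : (x == 0) || (x == m) || (x == 2 * m) || (3 * m <= x) -> memw w x = false.
Proof.
move=> h; rewrite /memw.
have -> : (0 < x < m) = false by apply/negbTE/negP => /andP[]; move: h; clear; lia.
have -> : (m < x < 2 * m) = false by apply/negbTE/negP => /andP[]; move: h; clear; lia.
have -> : (2 * m < x < 3 * m) = false by apply/negbTE/negP => /andP[]; move: h; clear; lia.
by [].
Qed.
End M.

Lemma count_shift (P : pred nat) k n : count P (iota k n) = count (fun i => P (k + i)) (iota 0 n).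
Proof. by rewrite -{1}(addn0 k) iotaDl count_map. Qed.

Lemma count_nth (P : pred nat) (w : seq nat) :
  count (fun i => P (nth 0 w i)) (iota 0 (size w)) = count P w.
Proof. by rewrite -[in RHS](mkseq_nth 0 w) /mkseq count_map. Qed.

Lemma weight_count w : all (fun x => x <= 2) w ->
  weight w = size w + count (fun x => 0 < x) w + count (fun x => x == 2) w.
Proof.
elim: w => //= x w IH /andP[hx /IH ->].
case: x hx => [|[|[|x]]] //= _; lia.
Qed.

Lemma count_iota_nth (Q P : pred nat) k (w : seq nat) :
  (forall i, i < size w -> Q (k + i) = P (nth 0 w i)) ->
  count Q (iota k (size w)) = count P w.
Proof.
move=> H; rewrite count_shift -(count_nth P w); apply: eq_in_count => i /=.
by rewrite mem_iota => /andP[_ hi]; apply: H.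
Qed.

Lemma card_Gset_weight w : all (fun x => x <= 2) w -> #|` Gset w|%fset = weight w.
Proof.
move=> hw; rewrite card_Gset weight_count //.
set n := size w.
have -> : 3 * n.+1 = 1 + n + 1 + n + 1 + n by lia.
do 5 rewrite iotaD count_cat.
have c1 : forall k, count (memw w) (iota k 1) = memw w k.
  by move=> k; rewrite /= addn0.
rewrite !c1 !memw_out; first last.
- by rewrite /n; lia.
- by rewrite /n; lia.
- by rewrite /n; lia.
have -> : count (memw w) (iota (0 + 1) n) = n.
  rewrite (@eq_in_count _ _ predT) ?count_predT ?size_iota //.
  by move=> i; rewrite mem_iota => hi; apply: memw_lo; rewrite /n in hi *; lia.
have -> : count (memw w) (iota (0 + (1 + n + 1)) n) = count (fun x => 0 < x) w.
  apply: count_iota_nth => i hi; rewrite memw_mid; last by rewrite /n in hi *; lia.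
  by congr (0 < nth 0 w _); rewrite /n in hi *; lia.
have -> : count (memw w) (iota (0 + (1 + n + 1 + n + 1)) n) = count (fun x => x == 2) w.
  apply: count_iota_nth => i hi; rewrite memw_hi; last by rewrite /n in hi *; lia.
  by congr (nth 0 w _ == 2); rewrite /n in hi *; lia.
by rewrite /= !addn0.
Qed.

Definition valid (w : seq nat) : bool :=
  all (fun z => memw w z ==> all (fun x => memw w x || memw w (z - x)) (iota 1 z.-1))
      (iota 0 (3 * (size w).+1)).

Lemma memw_bounds w z : memw w z -> 0 < z < 3 * (size w).+1.
Proof. by rewrite /memw => /or3P[/andP[]|/andP[]/andP[]|/andP[]/andP[]]; lia. Qed.

Lemma valid_of w : (forall z x, memw w z -> 0 < x < z -> memw w x || memw w (z - x)) -> valid w.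
Proof.
move=> H; apply/allP => z _; apply/implyP => hz; apply/allP => x; rewrite mem_iota => hx.
by apply: H => //; lia.
Qed.

Lemma valid_gapset w : valid w -> is_gapset (Gset w).
Proof.
move=> /allP V; split => [z|x y x0 y0]; rewrite ?GsetE.
  by move/memw_bounds => /andP[].
move=> hz; have := V (x + y); rewrite mem_iota.
have := memw_bounds hz => hb.
move=> /(_ ltac:(lia)); rewrite hz /= => /allP /(_ x); rewrite mem_iota.
move=> /(_ ltac:(lia)); rewrite addKn => /orP[]; by [left|right].
Qed.

Lemma gapset_valid w : is_gapset (Gset w) -> valid w.
Proof.
move=> [_ H]; apply: valid_of => z x hz hx.
have := H x (z - x); rewrite !GsetE subnKC; last by lia.
move=> /(_ ltac:(lia) ltac:(lia) hz) [->|->] //; by rewrite orbT.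
Qed.

Lemma mult_Gset w : multiplicity (Gset w) = (size w).+1.
Proof.
apply: multP => //; first by rewrite GsetE memw_out // eqxx orbT.
by move=> k hk; rewrite GsetE memw_lo.
Qed.

Lemma depth_Gset w : depth (Gset w) <= 3.
Proof.
rewrite depth_le3 mult_Gset (_ : 3 * (size w).+1 = (3 * (size w).+1).-1.+1) //.
apply/cond_le => x; rewrite GsetE => /memw_bounds; lia.
Qed.

Lemma nth_le2 w i : all (fun x => x <= 2) w -> nth 0 w i <= 2.
Proof.
move=> /allP H; case: (ltnP i (size w)) => hi; first exact/H/mem_nth.
by rewrite nth_default.
Qed.

Lemma Gset_inj w1 w2 : all (fun x => x <= 2) w1 -> all (fun x => x <= 2) w2 ->
  Gset w1 = Gset w2 -> w1 = w2.
Proof.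
move=> h1 h2 E.
have S : size w1 = size w2 by have := congr1 multiplicity E; rewrite !mult_Gset => -[].
apply: (eq_from_nth (x0 := 0)) => // i hi.
have e1 : (0 < nth 0 w1 i) = (0 < nth 0 w2 i).
  have := congr1 (fun G => (size w1).+1 + i.+1 \in G) E; rewrite /= !GsetE.
  rewrite [in X in X = _]memw_mid; last lia.
  rewrite [in X in _ = X]memw_mid; last lia.
  by rewrite -S addKn.
have e2 : (nth 0 w1 i == 2) = (nth 0 w2 i == 2).
  have := congr1 (fun G => 2 * (size w1).+1 + i.+1 \in G) E; rewrite /= !GsetE.
  rewrite [in X in X = _]memw_hi; last lia.
  rewrite [in X in _ = X]memw_hi; last lia.
  by rewrite -S addKn.
move: e1 e2.
have := nth_le2 i h1; have := nth_le2 i h2.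
case: (nth 0 w1 i) => [|[|[|?]]]; case: (nth 0 w2 i) => [|[|[|?]]] //.
Qed.

Lemma gapset_word G : is_gapset G -> depth G <= 3 ->
  exists w, [/\ all (fun x => x <= 2) w, valid w & Gset w = G].
Proof.
move=> [Gpos Gsplit] hd.
have [m0 mG mlo] := mult_spec G.
set m := multiplicity G in m0 mG mlo hd.
rewrite depth_le3 -/m (_ : 3 * m = (3 * m).-1.+1) in hd; last by lia.
move/cond_le: hd => hb.
have Gsh : forall x y, 0 < x -> 0 < y -> x + y \in G -> x \notin G -> y \in G.
  by move=> x y x0 y0 /(Gsplit x y x0 y0) [->|].
pose w := [seq (if 2 * m + i.+1 \in G then 2 else nat_of_bool (m + i.+1 \in G)) | i <- iota 0 m.-1].
have sw : (size w).+1 = m by rewrite size_map size_iota; lia.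
have nw : forall i, i < m.-1 -> nth 0 w i = (if 2 * m + i.+1 \in G then 2 else nat_of_bool (m + i.+1 \in G)).
  by move=> i hi; rewrite (nth_map 0) ?size_iota // nth_iota.
have aw : all (fun x => x <= 2) w.
  by apply/allP => x /mapP [i _ ->]; case: ifP => // _; apply: leq_trans (leq_b1 _) _.
have EG : Gset w = G.
  apply/fsetP => x; rewrite GsetE.
  have [x0|x0] := posnP x.
    rewrite memw_out ?x0 //; apply/esym/negbTE/negP => /Gpos; lia.
  have [xm|xm] := ltnP x m.
    by rewrite memw_lo ?mlo ?x0 ?sw.
  case: (ltngtP x m) xm => // [xm' _|-> _]; last first.
    by rewrite memw_out ?sw ?eqxx ?orbT // (negbTE mG).
  have [x2|x2] := ltnP x (2 * m).
    rewrite memw_mid ?sw ?x2 ?xm' // nw; last by lia.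
    have -> : m + (x - m).-1.+1 = x by lia.
    case: ifP => [h|]; last by case: (x \in G).
    by rewrite (Gsh m x) //; rewrite (_ : m + x = 2 * m + (x - m).-1.+1) //; lia.
  case: (ltngtP x (2 * m)) x2 => // [x2' _|-> _]; last first.
    rewrite memw_out ?sw ?eqxx ?orbT //; apply/esym/negbTE/negP => h.
    by move: (Gsh m m m0 m0); rewrite addnn -mul2n => /(_ h mG); rewrite (negbTE mG).
  have [x3|x3] := ltnP x (3 * m).
    rewrite memw_hi ?sw ?x3 ?x2' // nw; last by lia.
    have -> : 2 * m + (x - 2 * m).-1.+1 = x by lia.
    by case: ifP => // _; case: (_ \in G).
  rewrite memw_out ?sw ?x3 ?orbT //; apply/esym/negbTE/negP => /hb; lia.
exists w; split => //.
by apply: gapset_valid; rewrite EG.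
Qed.

Fixpoint fw (g : nat) : seq (seq nat) :=
  match g with
  | 0 => [:: [::]]
  | g1.+1 => map (cons 0) (fw g1) ++
      match g1 with 0 => [::] | g2.+1 => map (cons 1) (fw g2) end
  end.

Lemma fw2 g : fw g.+2 = map (cons 0) (fw g.+1) ++ map (cons 1) (fw g).
Proof. by []. Qed.
Lemma fw1 : fw 1 = map (cons 0) (fw 0). Proof. by []. Qed.

Lemma size_fw g : size (fw g) = fib g.+1.
Proof.
elim/ltn_ind: g => -[|[|g]] IH //.
by rewrite fw2 size_cat !size_map !IH.
Qed.

Lemma fw_prop g w : w \in fw g -> all (fun x => x <= 1) w && (weight w == g).
Proof.
elim/ltn_ind: g w => -[|[|g]] IH w.
- by rewrite inE => /eqP ->.
- rewrite fw1 => /mapP [u hu ->].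
  by have /andP[h1 /eqP h2] := IH 0 isT u hu; rewrite /= h1 h2 /=; lia.
- rewrite fw2 mem_cat => /orP[] /mapP [u hu ->].
    have /andP[h1 /eqP h2] := IH g.+1 (ltnSn _) u hu.
    by rewrite /= h1 h2 /=; lia.
  have /andP[h1 /eqP h2] := IH g (leqW (ltnSn _)) u hu.
  by rewrite /= h1 h2 /=; lia.
Qed.

Lemma uniq_fw g : uniq (fw g).
Proof.
have inj : forall c : nat, injective (cons c) by move=> c u v [].
elim/ltn_ind: g => -[|[|g]] IH //.
rewrite fw2 cat_uniq (map_inj_uniq (inj 0)) (map_inj_uniq (inj 1)) !IH // andbT /=.
apply/hasPn => -[|x u] /mapP [v _ []] //.
by move=> -> ->; rewrite mem_cons_map.
Qed.

Lemma valid_le1 w : all (fun x => x <= 1) w -> valid w.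
Proof.
move=> hw; have n1 : forall i, nth 0 w i <= 1.
  move=> i; case: (ltnP i (size w)) => hi; first exact: (allP hw _ (mem_nth 0 hi)).
  by rewrite nth_default.
apply: valid_of => z x hz hx.
have hz2 : z < 2 * (size w).+1.
  have hb := memw_bounds hz.
  case: (ltngtP z (2 * (size w).+1)) => // h.
    move: hz; rewrite memw_hi; last by lia.
    by move=> /eqP E; move: (n1 (z - 2 * (size w).+1).-1); rewrite E.
  have : memw w z = false by apply: memw_out; lia.
  by rewrite hz.
case: (ltnP x (size w).+1) => h; first by rewrite memw_lo //; lia.
by rewrite orbC memw_lo //; lia.
Qed.

Lemma valid_2le1 w : all (fun x => x <= 1) w -> valid (2 :: w).
Proof.
move=> hw; have n1 : forall i, nth 0 w i <= 1.
  move=> i; case: (ltnP i (size w)) => hi; first exact: (allP hw _ (mem_nth 0 hi)).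
  by rewrite nth_default.
set w' := 2 :: w.
have sw : size w' = (size w).+1 by [].
apply: valid_of => z x hz hx.
have hb := memw_bounds hz.
have [hz2|hz2] := ltnP z (2 * (size w').+1).
  case: (ltnP x (size w').+1) => h; first by rewrite memw_lo //; lia.
  by rewrite orbC memw_lo //; lia.
case: (ltngtP z (2 * (size w').+1)) hz2 => // [h _|E _]; last first.
  by rewrite E memw_out ?eqxx ?orbT in hz.
rewrite memw_hi in hz; last by lia.
have Ez : z = 2 * (size w').+1 + 1.
  move: hz; case E: (z - 2 * (size w').+1).-1 => [|i]; first by lia.
  by rewrite /w' /= => /eqP E2; move: (n1 i); rewrite E2.
have mm : memw w' (size w').+2.
  rewrite memw_mid; last by lia.
  by rewrite subSn // subnn.
case: (ltnP x (size w').+1) => h1; first by rewrite memw_lo //; lia.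
case: (ltnP x (size w').+3) => h2.
  case: (ltngtP x (size w').+1) h1 => // [h3 _|-> _].
    by rewrite (_ : x = (size w').+2) ?mm //; lia.
  by rewrite (_ : z - (size w').+1 = (size w').+2) ?mm ?orbT //; lia.
by rewrite orbC memw_lo //; lia.
Qed.

Unset Implicit Arguments.

Theorem mainTheorem3 (g : nat) : 3 <= g ->
  exists s : seq {fset nat},
    [/\ uniq s,
        (forall G : {fset nat},
           G \in s <-> [/\ is_gapset G, genus G = g & depth G <= 3]),
        2 * fib g <= size s
      & size s <= trib g.+1].
Proof.
move=> g3.
set s := undup (map Gset (filter valid (words g))).
have memS : forall w, all (fun x => x <= 2) w -> valid w -> weight w = g -> Gset w \in s.
  by move=> w h1 h2 h3; rewrite mem_undup map_f // mem_filter h2 mem_words h1 h3 eqxx.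
exists s; split.
- exact: undup_uniq.
- move=> G; split.
    rewrite mem_undup => /mapP [w]; rewrite mem_filter mem_words => /andP[v /andP[a /eqP wg]] ->.
    split; [exact: valid_gapset | | exact: depth_Gset].
    by rewrite /genus card_Gset_weight.
  move=> [gG gn gd]; have [w [a v E]] := gapset_word gG gd.
  by rewrite -E memS // -card_Gset_weight // E.
- set L := fw g ++ map (cons 2) (fw (g - 3)).
  have hL : forall w, w \in L -> [/\ all (fun x => x <= 2) w, valid w & weight w = g].
    move=> w; rewrite mem_cat => /orP[/fw_prop /andP[a /eqP e]|/mapP [u /fw_prop /andP[a /eqP e] ->]].
      split => //; last exact: valid_le1.
      by apply/allP => x /(allP a) /leq_trans; apply.
    split => /=; last by lia.
      by apply/allP => x /(allP a) /leq_trans; apply.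
    exact: valid_2le1.
  have uL : uniq L.
    have inj2 : injective (cons 2) by move=> u v [].
    rewrite cat_uniq uniq_fw (map_inj_uniq inj2) uniq_fw andbT /=.
    by apply/hasPn => x /mapP [u _ ->]; apply/negP => /fw_prop.
  have -> : 2 * fib g = size (map Gset L).
    rewrite size_map size_cat size_map !size_fw.
    case: g g3 {s memS L hL uL} => [|[|[|k]]] // _.
    rewrite subSS subSS subSS subn0 /=; lia.
  apply: uniq_leq_size.
    rewrite map_inj_in_uniq // => u v /hL [a1 _ _] /hL [a2 _ _]; exact: Gset_inj.
  by move=> G /mapP [w /hL [a v e] ->]; apply: memS.
- apply: leq_trans (size_undup _) _.
  by rewrite size_map -size_words size_filter count_size.
Qed.
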